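(* Let $q\in(0,1]$. Consider the policy that directly follows the ex ante solution: whenever a task of type $s$ arrives at time $t$, it notifies each volunteer $v$ independently with probability $x^*_{v,s,t}$. On instances of the online volunteer notification problem whose inter-activity time distribution has minimum discrete hazard rate $q$, this policy achieves a competitive ratio of at most $q$; that is, for every $c>q$ there is such an instance $\mathcal{I}$ on which the policy's expected number of completed tasks is less than $c\,\mathbf{LP}_{\mathcal{I}}$.
   Context: Online volunteer notification problem. An instance $\mathcal{I}$ consists of volunteers $[V]$, task types $[S]$, horizon $T$, arrival probabilities $\lambda_{s,t}\ge0$ with $\sum_s\lambda_{s,t}\le1$, match probabilities $p_{v,s}\in[0,1]$, and a probability mass function $g$ on the positive integers with CDF $G(\tau)=\sum_{i\le\tau}g(i)$, $G(0)=0$. In each period $t$ at most one task arrives, of type $s$ with probability $\lambda_{s,t}$, independently across periods. All volunteers start active. Upon an arrival the platform notifies a subset of volunteers; each notified active volunteer $v$ responds positively independently with probability $p_{v,s}$; the task is completed iff at least one does. A volunteer active and notified at time $t$ becomes inactive (regardless of response) and active again at $t+Z$, $Z\sim g$ independent; inactive volunteers ignore notifications and are unaffected by them. MDHR: $q=\min_{\tau\in\mathbb{N}}\frac{g(\tau)}{1-G(\tau-1)}$ (with $\frac00:=1$). $\mathcal{P}$: set of $\mathbf{x}$ with $0\le x_{v,s,t}\le1$ and $\sum_{\tau=1}^t\sum_s\lambda_{s,\tau}x_{v,s,\tau}(1-G(t-\tau))\le1$ for all $v,t$; $\mathbf{LP}_{\mathcal{I}}=\max_{\mathbf{x}\in\mathcal{P}}\sum_{t,s}\lambda_{s,t}\min\{\sum_vx_{v,s,t}p_{v,s},1\}$.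 Ex ante solution: $f(\mathbf{x})=\sum_{t,s}\lambda_{s,t}(1-\prod_v(1-x_{v,s,t}p_{v,s}))$; $\mathbf{x}^*_{LP}$ optimal for $\mathbf{LP}_{\mathcal{I}}$; $\mathbf{x}^*_{AA}$ output of: $\mathbf{x}^0=\mathbf{0}$, for $i=1..m$ ($m\in\mathbb{N}$) $\mathbf{y}^i\in\arg\max_{\mathbf{x}\in\mathcal{P}}\langle\mathbf{x},\nabla f(\mathbf{x}^{i-1})\rangle$, $\mathbf{x}^i=\mathbf{x}^{i-1}+\mathbf{y}^i/m$, output $\mathbf{x}^m$; $\mathbf{x}^*_{SQ}$ built for $v=1..V$ in order, $(x^{SQ}_{v,s,t})_{s,t}$ optimal for $\max\sum_{t,s}\lambda_{s,t}\prod_{u<v}(1-p_{u,s}x^{SQ}_{u,s,t})p_{v,s}x_{v,s,t}$ s.t. $0\le x_{v,s,t}\le1$ and $\sum_{\tau\le t}\sum_s\lambda_{s,\tau}x_{v,s,\tau}(1-G(t-\tau))\le1$ for all $t$; $\mathbf{x}^*\in\arg\max_{\mathbf{x}\in\{\mathbf{x}^*_{LP},\mathbf{x}^*_{AA},\mathbf{x}^*_{SQ}\}}f(\mathbf{x})$. *)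

(* Defs.v *)
From HB Require Import structures.
From mathcomp Require Import all_boot all_order all_algebra.
From mathcomp Require Import boolp classical_sets reals topology normedtype sequences.
Set Implicit Arguments. Unset Strict Implicit. Unset Printing Implicit Defensive.
Import Order.TTheory GRing.Theory Num.Theory numFieldNormedType.Exports.
Local Open Scope classical_set_scope.
Local Open Scope ring_scope.

Section OVN.
Variable R : realType.

(* An instance.  Periods 1..T are represented by t : 'I_T (t stands for period t+1). *)
Local Unset Implicit Arguments.
Record instance := Instance {
  nV : nat; nS : nat; nT : nat;
  lam : 'I_nS -> 'I_nT -> R;
  pr  : 'I_nV -> 'I_nS -> R;
  gm  : nat -> R
}.
Local Set Implicit Arguments.

Definition Gc (g : nat -> R) (k : nat) : R := \sum_(1 <= i < k.+1) g i.

Definition is_pmf_pos (g : nat -> R) : Prop :=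
  [/\ g 0%N = 0, (forall n, 0 <= g n) &
      (fun n => \sum_(0 <= k < n) g k) @ \oo --> (1 : R)].

Definition valid (I : instance) : Prop :=
  [/\ (forall s t, 0 <= lam I s t),
      (forall t, \sum_(s < nS I) lam I s t <= 1),
      (forall v s, 0 <= pr I v s <= 1) &
      is_pmf_pos (gm I)].

(* discrete hazard rate at tau >= 1, with 0/0 := 1 *)
Definition hazard (g : nat -> R) (tau : nat) : R :=
  if 1 - Gc g tau.-1 == 0 then 1 else g tau / (1 - Gc g tau.-1).

Definition mdhr (g : nat -> R) (q : R) : Prop :=
  (exists2 tau, (0 < tau)%N & hazard g tau = q) /\
  (forall tau, (0 < tau)%N -> q <= hazard g tau).

Definition sol (I : instance) := 'I_(nV I) -> 'I_(nS I) -> 'I_(nT I) -> R.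

Definition rowfeas (I : instance) (y : 'I_(nS I) -> 'I_(nT I) -> R) : Prop :=
  (forall s t, 0 <= y s t <= 1) /\
  (forall t : 'I_(nT I),
     \sum_(tau < nT I | (tau <= t)%N) \sum_(s < nS I)
        lam I s tau * y s tau * (1 - Gc (gm I) (t - tau)) <= 1).

Definition inP (I : instance) (x : sol I) : Prop := forall v, rowfeas (x v).

Definition lp_obj (I : instance) (x : sol I) : R :=
  \sum_(t < nT I) \sum_(s < nS I)
    lam I s t * Num.min (\sum_(v < nV I) x v s t * pr I v s) 1.

(* LP_I = max over P of lp_obj (written as sup, which equals the max) *)
Definition LPval (I : instance) : R := sup [set lp_obj x | x in inP (I:=I)].

Definition fobj (I : instance) (x : sol I) : R :=
  \sum_(t < nT I) \sum_(s < nS I)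
    lam I s t * (1 - \prod_(v < nV I) (1 - x v s t * pr I v s)).

Definition gradf (I : instance) (x : sol I) : sol I := fun v s t =>
  lam I s t * pr I v s * \prod_(u < nV I | u != v) (1 - x u s t * pr I u s).

Definition inner (I : instance) (x y : sol I) : R :=
  \sum_(v < nV I) \sum_(s < nS I) \sum_(t < nT I) x v s t * y v s t.

Definition is_LP_opt (I : instance) (x : sol I) : Prop :=
  inP x /\ forall y : sol I, inP y -> lp_obj y <= lp_obj x.

(* x is a possible output of the AA (continuous greedy) procedure with m steps *)
Definition is_AA_out (m : nat) (I : instance) (x : sol I) : Prop :=
  exists xs : nat -> sol I,
    [/\ (forall v s t, xs 0%N v s t = 0),
        (forall i, (0 < i <= m)%N ->
           exists y : sol I,
             [/\ inP y,
                 (forall z : sol I, inP z -> inner z (gradf (xs i.-1)) <= inner y (gradf (xs i.-1))) &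
                 (forall v s t, xs i v s t = xs i.-1 v s t + y v s t / m%:R)]) &
        (forall v s t, x v s t = xs m v s t)].

Definition sq_obj (I : instance) (x : sol I) (v : 'I_(nV I))
    (y : 'I_(nS I) -> 'I_(nT I) -> R) : R :=
  \sum_(t < nT I) \sum_(s < nS I)
    lam I s t * (\prod_(u < nV I | (u < v)%N) (1 - pr I u s * x u s t))
      * pr I v s * y s t.

Definition is_SQ_out (I : instance) (x : sol I) : Prop :=
  forall v, rowfeas (x v) /\
    forall y : 'I_(nS I) -> 'I_(nT I) -> R, rowfeas y -> sq_obj x v y <= sq_obj x v (x v).

Definition exante (m : nat) (I : instance) (x : sol I) : Prop :=
  exists xLP xAA xSQ : sol I,
    [/\ is_LP_opt xLP, is_AA_out m xAA, is_SQ_out xSQ,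
        (forall v s t, x v s t = xLP v s t) \/ (forall v s t, x v s t = xAA v s t)
          \/ (forall v s t, x v s t = xSQ v s t) &
        [/\ fobj xLP <= fobj x, fobj xAA <= fobj x & fobj xSQ <= fobj x]].

Section Policy.
Variable I : instance.
Variable x : sol I.

Definition lamN (s : 'I_(nS I)) (t : nat) : R :=
  if (insub t : option 'I_(nT I)) is Some i then lam I s i else 0.
Definition xN (v : 'I_(nV I)) (s : 'I_(nS I)) (t : nat) : R :=
  if (insub t : option 'I_(nT I)) is Some i then x v s i else 0.

(* delay index d : 'I_(T+1): d < T means Z = d+1; d = T means Z > T
   (volunteer never active again within the horizon) *)
Definition wdelay (d : 'I_(nT I).+1) : R :=
  if (d < nT I)%N then gm I d.+1 else 1 - Gc (gm I) (nT I).

(* val k r = expected number of tasks completed in the last k periods,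
   starting at (0-indexed) time nT - k, where volunteer v is active at time t
   iff r v <= t. *)
Fixpoint val (k : nat) (r : 'I_(nV I) -> nat) : R :=
  match k with
  | 0%N => 0
  | k'.+1 =>
    let t := (nT I - k)%N in
    \sum_(s < nS I) lamN s t *
      \sum_(N : {set 'I_(nV I)})
        (\prod_(v < nV I) (if v \in N then xN v s t else 1 - xN v s t)) *
        ((1 - \prod_(v < nV I | (v \in N) && (r v <= t)%N) (1 - pr I v s)) +
         \sum_(D : {ffun 'I_(nV I) -> 'I_(nT I).+1})
           (\prod_(v < nV I)
              (if (v \in N) && (r v <= t)%N then wdelay (D v)
               else ((D v == ord0) : nat)%:R)) *
           val k' (fun v => if (v \in N) && (r v <= t)%N
                            then (t + D v + 1)%N else r v))
    + (1 - \sum_(s < nS I) lamN s t) * val k' r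
  end.

Definition reward : R := val (nT I) (fun _ => 0%N).
End Policy.

End OVN.

Arguments nV {R} _.
Arguments nS {R} _.
Arguments nT {R} _.
Arguments lam {R} _ _ _.
Arguments pr {R} _ _ _.
Arguments gm {R} _ _.

(* Main.v *)
Require Import Defs.
From HB Require Import structures.
From mathcomp Require Import all_boot all_order all_algebra.
From mathcomp Require Import boolp classical_sets reals topology normedtype sequences.
From mathcomp Require Import ring lra.
Import Order.TTheory GRing.Theory Num.Theory numFieldNormedType.Exports.
Local Open Scope ring_scope.

Section Aux.
Variable R : realType.
Local Open Scope classical_set_scope.

Definition gq (q : R) (n : nat) : R :=
  if n == 1%N then q else if n == 2%N then 1 - q else 0.
Definition lamq (q : R) (s t : 'I_2) : R :=
  if val s == val t then (if val t == 0%N then 1 else q) else 0.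
Definition prq (eps : R) (v : 'I_1) (s : 'I_2) : R :=
  if val s == 0%N then eps else 1.
Definition Iq (eps q : R) : instance R := @Instance R 1 2 2 (lamq q) (prq eps) (gq q).

Lemma Gc0 q : Gc (gq q) 0 = 0.
Proof. by rewrite /Gc big_geq. Qed.
Lemma Gc1 q : Gc (gq q) 1 = q.
Proof. by rewrite /Gc big_nat1. Qed.
Lemma Gc2 q k : (2 <= k)%N -> Gc (gq q) k = 1.
Proof.
elim: k => // k IH; rewrite leq_eqVlt => /orP[/eqP<-|hk].
  by rewrite /Gc big_nat_recr //= big_nat1 /gq /=; lra.
by rewrite /Gc big_nat_recr //= -/(Gc _ _) IH // /gq; case: k hk {IH} => [|[|k]] //= _; rewrite addr0.
Qed.

Lemma mdhr_q eps q : 0 < q <= 1 -> mdhr (gm (Iq eps q)) q.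
Proof.
move=> /andP[q0 q1]; split.
  exists 1%N => //; rewrite /hazard /= Gc0 subr0 oner_eq0 divr1 /gq //.
move=> [|[|[|tau]]] //= _.
- by rewrite /hazard /= Gc0 subr0 oner_eq0 divr1 /gq.
- rewrite /hazard /= Gc1 /gq /=; case: ifP => [_|/negbT h]; first by [].
  by rewrite divff.
- rewrite /hazard /= Gc2 // subrr eqxx //.
Qed.

Lemma pmf_q q : 0 <= q <= 1 -> is_pmf_pos (gq q).
Proof.
move=> /andP[q0 q1]; split => //.
  by move=> [|[|[|n]]]; rewrite /gq //=; lra.
have H : (fun n => \sum_(0 <= k < n) gq q k) @ \oo --> (1:R).
  apply: cvg_near_cst; exists 3%N => // n /= hn.
  have h2 : (2 <= n.-1)%N by case: n hn => [|[|[|n]]].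
  have := Gc2 q n.-1 h2; rewrite /Gc prednK; last by case: n hn h2.
  by move=> <-; rewrite big_ltn ?{1}/gq /= ?add0r //; case: n hn h2.
exact: H.
Qed.

Lemma valid_q eps q : 0 < eps <= 1 -> 0 < q <= 1 -> valid (Iq eps q).
Proof.
move=> /andP[e0 e1] /andP[q0 q1]; split.
- move=> s t; rewrite /= /lamq; repeat case: ifP => _; lra.
- move=> t; rewrite /= !big_ord_recl big_ord0 /lamq /=.
  case: t => [[|[|t]] ht] //=; lra.
- move=> v s; rewrite /= /prq; case: ifP => _; lra.
- apply: pmf_q; lra.
Qed.

Definition Lf (eps q : R) (y : 'I_2 -> 'I_2 -> R) : R :=
  eps * y ord0 ord0 + q * y ord_max ord_max.

Lemma lp_obj_q eps q (x : sol (Iq eps q)) : 0 < eps <= 1 ->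
  (forall s t, 0 <= x ord0 s t <= 1) -> lp_obj x = Lf eps q (x ord0).
Proof.
move=> /andP[e0 e1] hx; rewrite /lp_obj /= !big_ord_recl !big_ord0 /lamq /prq /=.
have -> : lift ord0 ord0 = ord_max :> 'I_2 by apply: val_inj.
rewrite /Lf !mul0r !addr0 !add0r !mulr1 !mul1r.
have /andP[a0 a1] := hx ord0 ord0; have /andP[b0 b1] := hx ord_max ord_max.
rewrite !min_l //; first lra.
rewrite -[X in _ <= X]mulr1; apply: ler_pM => //; lra.
Qed.

Lemma inner_q eps q (z w : sol (Iq eps q)) : inner z (gradf w) = Lf eps q (z ord0).
Proof.
rewrite /inner /gradf /= big_ord1 !big_ord_recl !big_ord0 /lamq /prq /=.
have -> : lift ord0 ord0 = ord_max :> 'I_2 by apply: val_inj.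
rewrite !big1; try by move=> u; rewrite (ord1 u) eqxx.
rewrite /Lf; ring.
Qed.

Lemma sq_q eps q (w : sol (Iq eps q)) y : sq_obj w ord0 y = Lf eps q y.
Proof.
rewrite /sq_obj /= !big_ord_recl !big_ord0 /lamq /prq /=.
have -> : lift ord0 ord0 = ord_max :> 'I_2 by apply: val_inj.
rewrite !big1 //.
rewrite /Lf; ring.
Qed.

Lemma ones_feas eps q : 0 < q <= 1 ->
  rowfeas (I:=Iq eps q) (fun _ _ => 1).
Proof.
move=> /andP[q0 q1]; split; first by move=> *; rewrite lexx ler01.
move=> [[|[|t]] ht] //; rewrite big_mkcond /= !big_ord_recl big_ord0 /=.
all: rewrite !big_ord0 /lamq /= ?subnn ?Gc0 ?Gc1 ?subn0 ?Gc1; lra.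
Qed.

Lemma key eps q y : 0 < eps -> 0 < q -> (forall s t, y s t <= 1) ->
  Lf eps q (fun _ _ => 1) <= Lf eps q y -> y ord0 ord0 = 1 /\ y ord_max ord_max = 1.
Proof.
move=> e0 q0 hy; rewrite /Lf => h.
have h1 := hy ord0 ord0; have h2 := hy ord_max ord_max.
have a : eps * (1 - y ord0 ord0) >= 0 by apply: mulr_ge0; lra.
have b : q * (1 - y ord_max ord_max) >= 0 by apply: mulr_ge0; lra.
have a' : eps * (1 - y ord0 ord0) = 0 by nra.
have b' : q * (1 - y ord_max ord_max) = 0 by nra.
move/eqP: a'; move/eqP: b'; rewrite !mulf_eq0 !subr_eq0 (gt_eqF e0) (gt_eqF q0) /=.
by move=> /eqP <- /eqP <-.
Qed.

Lemma exante_q eps q m (x : sol (Iq eps q)) : 0 < eps <= 1 -> 0 < q <= 1 -> (0 < m)%N ->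
  exante m x -> x ord0 ord0 ord0 = 1 /\ x ord0 ord_max ord_max = 1.
Proof.
move=> he hq hm [xLP [xAA [xSQ [[hLP1 hLP2] [xs [xs0 xsS xsm]] hSQ hx _]]]].
have e0 : 0 < eps by case/andP: he.
have q0 : 0 < q by case/andP: hq.
have ones := ones_feas eps q hq.
have box (y : 'I_2 -> 'I_2 -> R) : rowfeas (I:=Iq eps q) y -> forall s t, y s t <= 1.
  by move=> [h _] s t; case/andP: (h s t).
have rLP : xLP ord0 ord0 ord0 = 1 /\ xLP ord0 ord_max ord_max = 1.
  apply: (@key eps q) => //; first exact: box (hLP1 ord0).
  have := hLP2 (fun _ _ _ => 1) (fun _ => ones).
  have bLP : forall s t, 0 <= xLP ord0 s t <= 1 by case: (hLP1 ord0).
  rewrite (@lp_obj_q eps q xLP he bLP) (@lp_obj_q eps q (fun _ _ _ => 1) he) //.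
  by move=> _ _; rewrite ler01 lexx.
have rSQ : xSQ ord0 ord0 ord0 = 1 /\ xSQ ord0 ord_max ord_max = 1.
  have [h1 h2] := hSQ ord0.
  apply: (@key eps q) => //; first exact: box h1.
  by have := h2 _ ones; rewrite !sq_q.
have rAA : forall i, (i <= m)%N -> xs i ord0 ord0 ord0 = i%:R / m%:R /\
    xs i ord0 ord_max ord_max = i%:R / m%:R.
  elim=> [|i IH] hi; first by rewrite !xs0 mul0r.
  have [y [hy1 hy2 hy3]] := xsS i.+1 hi.
  have [y1 y2] : y ord0 ord0 ord0 = 1 /\ y ord0 ord_max ord_max = 1.
    apply: (@key eps q) => //; first exact: box (hy1 ord0).
    by have := hy2 (fun _ _ _ => 1) (fun _ => ones); rewrite !inner_q.
  have [I1 I2] := IH (ltnW hi).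
  by rewrite !hy3 /= I1 I2 y1 y2 -mulrDl -natr1.
have [A1 A2] := rAA m (leqnn m).
have mn0 : (m%:R : R) != 0 by rewrite pnatr_eq0 -lt0n.
rewrite divff // in A1 A2.
case: hx => [h|[h|h]]; rewrite !h //.
by rewrite !xsm.
Qed.

Lemma LP_q eps q : 0 < eps <= 1 -> 0 < q <= 1 -> eps + q <= LPval (Iq eps q).
Proof.
move=> he hq; have ones := ones_feas eps q hq.
have b1 : forall (s t : 'I_2), 0 <= (fun _ _ _ => 1 : R) (ord0 : 'I_1) s t <= 1.
  by move=> _ _; rewrite ler01 lexx.
have -> : eps + q = lp_obj (I:=Iq eps q) (fun _ _ _ => 1).
  by rewrite (@lp_obj_q eps q (fun _ _ _ => 1) he b1) /Lf !mulr1.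
apply: sup_upper_bound; last by exists (fun _ _ _ => 1).
split; first by exists (lp_obj (I:=Iq eps q) (fun _ _ _ => 1)); exists (fun _ _ _ => 1).
exists (eps + q) => _ [x hx <-].
have bx : forall s t, 0 <= x ord0 s t <= 1 by case: (hx ord0).
rewrite (@lp_obj_q eps q x he bx) /Lf.
move: (bx ord0 ord0) (bx ord_max ord_max) => /andP[a0 a1] /andP[c0 c1].
case/andP: he => e0 e1; case/andP: hq => q0 q1; clear bx b1 ones hx.
nra.
Qed.

Lemma sum_set1 (F : {set 'I_1} -> R) : \sum_N F N = F finset.set0 + F (finset.setTfor 'I_1).
Proof.
have T0 : (finset.setTfor 'I_1) != finset.set0.
  by apply/eqP => /setP/(_ ord0); rewrite !inE.
rewrite (bigD1 (finset.setTfor 'I_1)) //= (bigD1 finset.set0) 1?eq_sym //= big1 ?addr0 1?addrC //.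
move=> N /andP[hT h0]; exfalso; case: (boolP (ord0 \in N)) => h.
  by move/eqP: hT; apply; apply/setP=> i; rewrite (ord1 i) !inE h.
by move/eqP: h0; apply; apply/setP => i; rewrite (ord1 i) !inE (negbTE h).
Qed.

Lemma lamN0 eps q s : lamN (I:=Iq eps q) s 0 = lamq q s ord0.
Proof. by rewrite /lamN insubT //= => h; congr lamq; apply: val_inj. Qed.
Lemma lamN1 eps q s : lamN (I:=Iq eps q) s 1 = lamq q s ord_max.
Proof. by rewrite /lamN insubT //= => h; congr lamq; apply: val_inj. Qed.
Lemma xN0 eps q x v s : xN (I:=Iq eps q) x v s 0 = x v s ord0.
Proof. by rewrite /xN insubT //=; congr (x v s _); apply: val_inj. Qed.
Lemma xN1 eps q x v s : xN (I:=Iq eps q) x v s 1 = x v s ord_max.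
Proof. by rewrite /xN insubT //=; congr (x v s _); apply: val_inj. Qed.

Lemma sum_mul0 (T : finType) (F : T -> R) : \sum_i F i * 0 = 0.
Proof. by apply: big1 => i _; exact: mulr0. Qed.

Lemma reward_q eps q (x : sol (Iq eps q)) :
  x ord0 ord0 ord0 = 1 -> x ord0 ord_max ord_max = 1 ->
  reward x = eps + q * q.
Proof.
move=> x1 x2; rewrite /reward /= (_ : (2-2 = 0)%N) // (_ : (2-1 = 1)%N) //.
rewrite !big_ord_recl !big_ord0 !lamN0 !lamN1 /lamq /=.
have L : lift ord0 ord0 = ord_max :> 'I_2 by apply: val_inj.
rewrite !L !mul0r !addr0 !add0r subrr !mul0r addr0 mul1r.
rewrite sum_set1 !big_ord1 !inE !xN0 x1 subrr !mul0r add0r mul1r.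
rewrite big_mkcond big_ord1 /= inE /prq /=.
under eq_bigr => D _ do rewrite big_ord1 inE /= !big_ord_recl big_ord0 !lamN1 /lamq /= mul0r add0r addr0 !mulr0 addr0 sum_set1 !big_ord1 !inE /= !xN1 !L x2 subrr !mul0r add0r mul1r !sum_mul0 !addr0 big_mkcond big_ord1 !inE /=.
rewrite (bigD1 [ffun => ord0]) //= big1 ?addr0.
  by rewrite ffunE /= subr0 mulr1 /wdelay /= /gq /=; ring.
move=> D hD; have : D ord0 != ord0.
  apply: contra hD => /eqP h; apply/eqP/ffunP => i; by rewrite (ord1 i) ffunE h.
case: (D ord0) => [[|d] hd] //= _; rewrite (_ : (0 + d.+1 + 1 <= 1)%N = false) ?subrr ?mulr0 //; rewrite add0n addn1 //=.
Qed.
End Aux.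

Theorem proposition3 (R : realType) (q : R) (hq : 0 < q <= 1)
  (m : nat) (hm : (0 < m)%N)
  (choose : forall I : instance R, sol I)
  (hchoose : forall I : instance R, valid I -> exante m (choose I))
  (c : R) (hc : q < c) :
  exists I : instance R,
    [/\ valid I, mdhr (gm I) q & reward (choose I) < c * LPval I].
Proof.
have q0 : 0 < q by case/andP: hq.
have q1 : q <= 1 by case/andP: hq.
pose D := q * (c - q).
have D0 : 0 < D by rewrite /D mulr_gt0 // subr_gt0.
pose eps := Num.min 1 (D / 2).
have e0 : 0 < eps by rewrite /eps lt_min ltr01 divr_gt0.
have e1 : eps <= 1 by rewrite /eps ge_min lexx.
have e2 : eps <= D / 2 by rewrite /eps ge_min lexx orbT.
have he : 0 < eps <= 1 by rewrite e0 e1.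
have hv := @valid_q R eps q he hq.
exists (Iq R eps q); split => //; first exact: (@mdhr_q R eps q hq).
have [x1 x2] := @exante_q R eps q m _ he hq hm (hchoose _ hv).
rewrite (@reward_q R eps q _ x1 x2).
have hL := @LP_q R eps q he hq.
have c0 : 0 < c by apply: lt_trans hc.
apply: (@lt_le_trans _ _ (c * (eps + q))); last by rewrite ler_pM2l.
rewrite /D in e2 D0; clear -e0 e1 e2 q0 q1 hc c0 D0.
nra.
Qed.
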